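(* Let $\alpha\in\Delta_+$, and let $r,s,k\in\mathbb{Z}_{>0}$ and $K\in\mathbb{Z}_{\ge0}$ satisfy $r+s\ge kr+K$. Then, in $U(\mathfrak{sl}_{2,\alpha}[t])$, \[\big[e_\alpha,\ {}_kf_\alpha(r,s)\big]\in \sum_{(r',s')}U\big(t\,\mathfrak{sl}_{2,\alpha}[t]\big)\,{}_kf_\alpha(r',s')+U\big(t\,\mathfrak{sl}_{2,\alpha}[t]\big)\,t\mathfrak{b}_\alpha[t],\] where the sum runs over all pairs $r',s'\in\mathbb{Z}_{>0}$ with $r'+s'\ge kr'+K$.
   Context: $\mathfrak g=\mathfrak{sl}_{n+1}(\mathbb C)$, positive roots $\Delta_+$; for $\alpha\in\Delta_+$, $e_\alpha,f_\alpha$ are root vectors with $[e_\alpha,f_\alpha]=h_\alpha$ the coroot. $\mathfrak{sl}_{2,\alpha}=\mathbb{C}e_\alpha\oplus\mathbb{C}h_\alpha\oplus\mathbb{C}f_\alpha$, $\mathfrak{b}_\alpha=\mathbb{C}e_\alpha\oplus\mathbb{C}h_\alpha$. For a Lie algebra $\mathfrak a$, $\mathfrak a[t]=\mathfrak a\otimes\mathbb C[t]$ with bracket $[x\otimes f,y\otimes g]=[x,y]\otimes fg$, and $t\mathfrak a[t]=\mathfrak a\otimes t\mathbb C[t]$; $e_\alpha$ denotes $e_\alpha\otimes 1$. For $X$ in a Lie algebra, $X^{(b)}=X^b/b!$. For $r,s\in\mathbb{Z}_{\ge0}$ let $\mathbf{S}(r,s)=\{(b_j)_{j\ge0}: b_j\in\mathbb{Z}_{\ge0},\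 \sum_j b_j=r,\ \sum_j jb_j=s\}$, and for $k\in\mathbb Z_{\ge0}$ let ${}_k\mathbf{S}(r,s)$ be the subset with $b_j=0$ for all $j<k$. For $x\in\mathfrak g$ define ${}_kx(r,s)=\sum_{(b_j)\in{}_k\mathbf{S}(r,s)}(x\otimes t^k)^{(b_k)}(x\otimes t^{k+1})^{(b_{k+1})}\cdots(x\otimes t^s)^{(b_s)}\in U(\mathfrak g[t])$ (zero if the index set is empty). *)

(* Defs.v *)
From HB Require Import structures.
From mathcomp Require Import all_boot all_order all_algebra all_field.
Set Implicit Arguments. Unset Strict Implicit. Unset Printing Implicit Defensive.
Import Order.TTheory GRing.Theory Num.Theory.
Local Open Scope ring_scope.

Definition divpow (A : algType algC) (X : A) (b : nat) : A :=
  (b`!%:R : algC)^-1 *: X ^+ b.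

(* The index set  _k S(r,s)  : sequences (b_j)_{j>=0} with sum r, weighted sum s,
   b_j = 0 for j < k.  For j > s one necessarily has b_j = 0 (as j >= 1), and
   b_j <= r, so such sequences are exactly the finite functions below. *)
Definition kS (k r s : nat) (b : {ffun 'I_s.+1 -> 'I_r.+1}) : bool :=
  [&& (\sum_(j < s.+1) (b j : nat))%N == r,
      (\sum_(j < s.+1) (j * b j)%N)%N == s &
      [forall j : 'I_s.+1, (j < k)%N ==> ((b j : nat) == 0%N)]].

Arguments kS k r s b : clear implicits.

(* _k x(r,s), where x j stands for the image of x (x) t^j. *)
Definition kx (A : algType algC) (x : nat -> A) (k r s : nat) : A :=
  \sum_(b : {ffun 'I_s.+1 -> 'I_r.+1} | kS k r s b)
     \prod_(k <= j < s.+1) divpow (x j) (b (inord j) : nat).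

(* Relations of sl_2[t] on the images e m, h m, f m of e(x)t^m, h(x)t^m, f(x)t^m:
   i.e. the linear extension is a Lie algebra map sl_2[t] -> A (A with commutator). *)
Definition sl2_current_rels (A : algType algC) (e h f : nat -> A) : Prop :=
  forall m n : nat,
  e m * f n - f n * e m = h (m + n)%N /\
  h m * e n - e n * h m = e (m + n)%N *+ 2 /\
  h m * f n - f n * h m = - (f (m + n)%N *+ 2) /\
  e m * e n = e n * e m /\
  f m * f n = f n * f m /\
  h m * h n = h n * h m.

(* Image of U(t sl_2[t]) in A: the unital subalgebra generated by x(x)t^m, m >= 1. *)
Inductive Uplus (A : algType algC) (e h f : nat -> A) : A -> Prop :=
| Uplus1 : Uplus e h f 1
| Uplus_e m : (0 < m)%N -> Uplus e h f (e m)
| Uplus_h m : (0 < m)%N -> Uplus e h f (h m)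
| Uplus_f m : (0 < m)%N -> Uplus e h f (f m)
| Uplus_add u v : Uplus e h f u -> Uplus e h f v -> Uplus e h f (u + v)
| Uplus_scale (c : algC) u : Uplus e h f u -> Uplus e h f (c *: u)
| Uplus_mul u v : Uplus e h f u -> Uplus e h f v -> Uplus e h f (u * v).

(* The subspace  sum_{(r',s')} U(t sl2[t]) _kf(r',s') + U(t sl2[t]) t b[t],
   (r',s' > 0, r'+s' >= k r' + K), with t b[t] spanned by e(x)t^m, h(x)t^m, m >= 1. *)
Inductive target (A : algType algC) (e h f : nat -> A) (k K : nat) : A -> Prop :=
| target0 : target e h f k K 0
| target_add x y : target e h f k K x -> target e h f k K y -> target e h f k K (x + y)
| target_scale (c : algC) x : target e h f k K x -> target e h f k K (c *: x)
| target_kf u r' s' : Uplus e h f u -> (0 < r')%N -> (0 < s')%N ->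
    (k * r' + K <= r' + s')%N -> target e h f k K (u * kx f k r' s')
| target_e u m : Uplus e h f u -> (0 < m)%N -> target e h f k K (u * e m)
| target_h u m : Uplus e h f u -> (0 < m)%N -> target e h f k K (u * h m).

(* Main.v *)
Require Import Defs.
From HB Require Import structures.
From mathcomp Require Import all_boot all_order all_algebra all_field.
From mathcomp Require Import zify.
Import GRing.Theory.
Local Open Scope ring_scope.

Section Main.
Variable A : algType algC.
Variables e h f : nat -> A.
Variable k : nat.
Hypothesis Hrel : sl2_current_rels e h f.
Hypothesis k_gt0 : (0 < k)%N.

Lemma commf m n : f m * f n = f n * f m.
Proof. by have [_ [_ [_ [_ [H _]]]]] := Hrel m n. Qed.
Lemma ef n : e 0 * f n - f n * e 0 = h n.
Proof. by have [H _] := Hrel 0 n. Qed.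
Lemma hf m n : h m * f n - f n * h m = - (f (m + n)%N *+ 2).
Proof. by have [_ [_ [H _]]] := Hrel m n. Qed.

Lemma comm_split (a b c : A) :
  a * (b * c) - (b * c) * a = (a * b - b * a) * c + b * (a * c - c * a).
Proof.
rewrite mulrBl mulrBr !mulrA addrA; congr (_ - _).
by rewrite subrK.
Qed.

Fixpoint T (r s : nat) : A :=
  match r with
  | 0 => (s == 0)%:R
  | r'.+1 => \sum_(j < s.+1 | (k <= j)%N) f j * T r' (s - j)
  end.

Lemma Tcomm m r s : f m * T r s = T r s * f m.
Proof.
elim: r s => [|r IH] s /=; first exact: commr_nat.
apply: commr_sum => j _; apply: commrM; [exact: commf | exact: IH].
Qed.

Lemma Uplus0 : Uplus e h f 0.
Proof. by rewrite -(scale0r 1); apply: Uplus_scale; exact: Uplus1. Qed.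

Lemma Uplus_nat n : Uplus e h f n%:R.
Proof. have -> : (n%:R : A) = (n%:R : algC) *: 1 by rewrite scaler_nat.
by apply: Uplus_scale; exact: Uplus1. Qed.

Lemma Uplus_sum (I : Type) (r : seq I) (P : pred I) (F : I -> A) :
  (forall i, P i -> Uplus e h f (F i)) -> Uplus e h f (\sum_(i <- r | P i) F i).
Proof. move=> H; apply: big_ind => //; [exact: Uplus0 | exact: Uplus_add]. Qed.

Lemma T_Uplus r s : Uplus e h f (T r s).
Proof.
elim: r s => [|r IH] s /=; first exact: Uplus_nat.
apply: Uplus_sum => j kj; apply: Uplus_mul => //; apply: Uplus_f.
exact: leq_trans kj.
Qed.

Variable K : nat.
Notation tg := (target e h f k K).

Lemma tg_sum (I : Type) (r : seq I) (P : pred I) (F : I -> A) :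
  (forall i, P i -> tg (F i)) -> tg (\sum_(i <- r | P i) F i).
Proof. move=> H; apply: big_ind => //; [exact: target0 | exact: target_add]. Qed.

Lemma tg_opp x : tg x -> tg (- x).
Proof. by move=> H; rewrite -scaleN1r; apply: target_scale. Qed.

Lemma tg_sub x y : tg x -> tg y -> tg (x - y).
Proof. by move=> Hx Hy; apply: target_add => //; apply: tg_opp. Qed.

Lemma tg_muln x n : tg x -> tg (x *+ n).
Proof. by move=> H; rewrite -scaler_nat; apply: target_scale. Qed.


Lemma tri_sq s (F : nat -> nat -> A) :
  \sum_(j < s.+1 | (k <= j)%N) \sum_(l < (s - j).+1 | (k <= l)%N) F j l =
  \sum_(j < s.+1) \sum_(l < s.+1)
     (if [&& (k <= j)%N, (k <= l)%N & (j + l <= s)%N] then F j l else 0).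
Proof.
rewrite big_mkcond; apply: eq_bigr => j _.
case: ifP => kj /=; last by rewrite big1.
rewrite (@big_ord_widen_cond _ _ _ _ s.+1); last by have := ltn_ord j; lia.
rewrite big_mkcond; apply: eq_bigr => l _.
have jl := ltn_ord j.
by have -> : ((k <= l) && (l < (s - j).+1))%N = ((k <= l) && (j + l <= s))%N by lia.
Qed.

Lemma exch_tri s (F : nat -> nat -> A) :
  \sum_(j < s.+1 | (k <= j)%N) \sum_(l < (s - j).+1 | (k <= l)%N) F j l =
  \sum_(l < s.+1 | (k <= l)%N) \sum_(j < (s - l).+1 | (k <= j)%N) F j l.
Proof.
rewrite tri_sq (tri_sq s (fun l j => F j l)) exchange_big.
apply: eq_bigr => l _; apply: eq_bigr => j _.
by rewrite addnC andbCA.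
Qed.

Lemma swapG (G : nat -> A) r s : (forall j l, f j * G l = G l * f j) ->
  \sum_(j < s.+1 | (k <= j)%N) f j * \sum_(l < (s - j).+1 | (k <= l)%N) G l * T r (s - j - l)
  = \sum_(l < s.+1 | (k <= l)%N) G l * T r.+1 (s - l).
Proof.
move=> HG.
under eq_bigr => j _ do rewrite mulr_sumr.
rewrite (exch_tri s (fun j l => f j * (G l * T r (s - j - l)))).
apply: eq_bigr => l _ /=; rewrite mulr_sumr; apply: eq_bigr => j _.
by rewrite mulrA HG -mulrA subnAC.
Qed.

Lemma TH a r s : h a * T r s - T r s * h a =
  - ((\sum_(l < s.+1 | (k <= l)%N) f (a + l)%N * T r.-1 (s - l)) *+ r.*2).
Proof.
elim: r s => [|r IH] s /=.
  by rewrite (commr_nat (h a)) subrr mulr0n oppr0.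
rewrite mulr_sumr mulr_suml -sumrB.
rewrite (eq_bigr (fun j : 'I_s.+1 => (h a * f j - f j * h a) * T r (s - j) + f j * (h a * T r (s - j) - T r (s - j) * h a))); last first.
  move=> j _. rewrite comm_split. done.
under eq_bigr => j _ do rewrite hf IH.
rewrite big_split /=.
have -> : \sum_(i < s.+1 | (k <= i)%N) - (f (a + i) *+ 2) * T r (s - i)
   = - ((\sum_(l < s.+1 | (k <= l)%N) f (a + l) * T r (s - l)) *+ 2).
  by rewrite -sumrMnl -sumrN; apply: eq_bigr => i _; rewrite mulNr mulrnAl.
have -> : \sum_(i < s.+1 | (k <= i)%N) f i * - ((\sum_(l < (s - i).+1 | (k <= l)%N)
        f (a + l) * T r.-1 (s - i - l)) *+ r.*2)
   = - ((\sum_(i < s.+1 | (k <= i)%N) f i * (\sum_(l < (s - i).+1 | (k <= l)%N)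
        f (a + l) * T r.-1 (s - i - l))) *+ r.*2).
  by rewrite -sumrMnl -sumrN; apply: eq_bigr => i _; rewrite mulrN mulrnAr.
case: r IH => [|r] IH.
  by rewrite /= mulr0n subr0.
rewrite /= (swapG (fun l => f (a + l))); last by move=> j l; exact: commf.
by rewrite -opprD -mulrnDr; congr (- (_ *+ _)); lia.
Qed.

Lemma zmod_id (x y : A) m n p :
  -(y *+ m) + x + (x *+ n - y *+ p) = x *+ n.+1 - (y *+ (m + p)).
Proof.
rewrite mulrS mulrnDr opprD addrACA (addrC (- (y *+ m))) addrACA.
by rewrite (addrC (x *+ n)).
Qed.

Definition Psi (r' s : nat) := \sum_(j < s.+1 | (k <= j)%N)
   \sum_(l < (s - j).+1 | (k <= l)%N) f (j + l) * T r' (s - j - l).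

Lemma A3 r s : \sum_(j < s.+1 | (k <= j)%N) f j *
   \sum_(l < (s - j).+1 | (k <= l)%N) T r (s - j - l) * h l
 = \sum_(l < s.+1 | (k <= l)%N) T r.+1 (s - l) * h l.
Proof.
under eq_bigr => j _ do rewrite mulr_sumr.
rewrite (exch_tri s (fun j l => f j * (T r (s - j - l) * h l))).
apply: eq_bigr => l _ /=; rewrite mulr_suml; apply: eq_bigr => j _.
by rewrite mulrA subnAC.
Qed.

Lemma PsiRec r' s : \sum_(j < s.+1 | (k <= j)%N) f j * Psi r' (s - j) = Psi r'.+1 s.
Proof.
under eq_bigr => j _ do rewrite /Psi mulr_sumr.
rewrite (exch_tri s (fun j a => f j * \sum_(l < (s - j - a).+1 | (k <= l)%N)
     f (a + l) * T r' (s - j - a - l))).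
apply: eq_bigr => a _ /=.
under eq_bigr => j _ do rewrite (subnAC s j a).
rewrite (swapG (fun l => f (a + l))) //.
by move=> j l; exact: commf.
Qed.

Lemma D1 r s : e 0 * T r s - T r s * e 0 =
  (\sum_(j < s.+1 | (k <= j)%N) T r.-1 (s - j) * h j) *+ r - Psi r.-2 s *+ (r * r.-1).
Proof.
elim: r s => [|r IH] s /=.
  by rewrite (commr_nat (e 0)) subrr !mulr0n subrr.
rewrite mulr_sumr mulr_suml -sumrB.
rewrite (eq_bigr (fun j : 'I_s.+1 => (e 0 * f j - f j * e 0) * T r (s - j) +
   f j * (e 0 * T r (s - j) - T r (s - j) * e 0))); last first.
  by move=> j _; rewrite comm_split.
under eq_bigr => j _ do rewrite ef IH -[h j * T r (s - j)](subrK (T r (s - j) * h j)) TH.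
under eq_bigr => j _ do rewrite mulrBr !mulrnAr.
rewrite big_split big_split /= sumrB.
rewrite sumrN.
have -> : \sum_(i < s.+1 | (k <= i)%N)
    (\sum_(l < (s - i).+1 | (k <= l)%N) f (i + l) * T r.-1 (s - i - l)) *+ r.*2
  = Psi r.-1 s *+ r.*2 by rewrite sumrMnl.
have -> : \sum_(i < s.+1 | (k <= i)%N) (f i * (\sum_(l < (s - i).+1 | (k <= l)%N) T r.-1 (s - i - l) * h l)) *+ r
  = (\sum_(l < s.+1 | (k <= l)%N) T r (s - l) * h l) *+ r.
  rewrite sumrMnl; case: r {IH} => [|r]; first by rewrite !mulr0n.
  by rewrite A3.
have -> : \sum_(i < s.+1 | (k <= i)%N) (f i * Psi r.-2 (s - i)) *+ (r * r.-1)
  = Psi r.-1 s *+ (r * r.-1).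
  rewrite sumrMnl; case: r {IH} => [|[|r]]; try by rewrite !muln0 !mulr0n.
  by rewrite PsiRec.
rewrite zmod_id; congr (_ - _ *+ _).
case: r {IH} => [|r] //=; nia.
Qed.

Definition Vw (r s : nat) := \sum_(m < s.+1 | (k <= m)%N) (f m * T r (s - m)) *+ m.

Lemma VwRec r s : \sum_(j < s.+1 | (k <= j)%N) f j * Vw r (s - j) = Vw r.+1 s.
Proof.
under eq_bigr => j _ do rewrite /Vw mulr_sumr.
rewrite (exch_tri s (fun j m => f j * (f m * T r (s - j - m) *+ m))).
apply: eq_bigr => m _ /=; rewrite mulr_sumr -sumrMnl.
apply: eq_bigr => j _.
by rewrite mulrnAr mulrA commf -mulrA subnAC.
Qed.

Lemma VwE r s : T r.+1 s *+ s = Vw r s *+ r.+1.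
Proof.
elim: r s => [|r IH] s.
  rewrite /= -sumrMnl mulr1n /Vw; apply: eq_bigr => j _.
  have := ltn_ord j => jl.
  case: (eqVneq (s - j) 0)%N => H.
    by rewrite /= H; congr (_ *+ _); lia.
  by rewrite /= (negbTE H) mulr0 !mul0rn.
rewrite [T r.+2 s]/= -sumrMnl.
have -> : \sum_(i < s.+1 | (k <= i)%N) f i * T r.+1 (s - i) *+ s =
  \sum_(i < s.+1 | (k <= i)%N) (f i * T r.+1 (s - i) *+ i + f i * (T r.+1 (s - i) *+ (s - i))).
  apply: eq_bigr => i _; rewrite mulrnAr -mulrnDr.
  by have := ltn_ord i; move=> ?; congr (_ *+ _); lia.
rewrite big_split /=.
under [X in _ + X = _]eq_bigr => i _ do rewrite IH mulrnAr.
rewrite sumrMnl VwRec.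
by rewrite [Vw r.+1 s *+ r.+2]mulrS.
Qed.

Lemma shift_sum n a (G : nat -> A) :
  \sum_(l < n | (k <= l)%N) G (a + l)%N = \sum_(m < a + n | (a + k <= m)%N) G m.
Proof.
elim: n => [|n IH].
  rewrite big_ord0 addn0 big1 // => m H.
  by have := ltn_ord m; lia.
rewrite big_mkcond big_ord_recr /= -big_mkcond IH addnS.
rewrite [RHS]big_mkcond big_ord_recr /= -big_mkcond.
by rewrite leq_add2l.
Qed.

Lemma sum_cnt n m (x : A) :
  \sum_(j < n | (k <= j)%N && (j + k <= m)%N) x = x *+ (minn n (m.+1 - k) - k).
Proof.
elim: n => [|n IH]; first by rewrite big_ord0 min0n sub0n mulr0n.
rewrite big_mkcond big_ord_recr /= -big_mkcond IH.
case: ifP => H.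
  by rewrite -mulrSr; congr (_ *+ _); lia.
by rewrite addr0; congr (_ *+ _); lia.
Qed.

Lemma pairsum s (G : nat -> A) :
  \sum_(j < s.+1 | (k <= j)%N) \sum_(l < (s - j).+1 | (k <= l)%N) G (j + l)%N =
  \sum_(m < s.+1) G m *+ (m.+1 - k.*2).
Proof.
rewrite (eq_bigr (fun j : 'I_s.+1 => \sum_(m < s.+1 | (j + k <= m)%N) G m)); last first.
  move=> j _; rewrite shift_sum.
  by rewrite (_ : (j + (s - j).+1 = s.+1)%N) //; have := ltn_ord j; lia.
rewrite (exchange_big_dep predT) //=.
apply: eq_bigr => m _.
rewrite (eq_bigl (fun j : 'I_s.+1 => (k <= j)%N && (j + k <= m)%N)); last first.
  by move=> j /=; rewrite (addnC j).
rewrite sum_cnt; congr (_ *+ _).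
by have := ltn_ord m; lia.
Qed.

Lemma divpow0 (x : A) : divpow x 0 = 1.
Proof. by rewrite /divpow fact0 invr1 expr0 scale1r. Qed.

Lemma divpowS (x : A) n : x * divpow x n = n.+1%:R *: divpow x n.+1.
Proof.
rewrite /divpow -scalerAr -exprS scalerA; congr (_ *: _).
rewrite factS natrM invfM mulrA mulfV ?mul1r //.
by rewrite Num.Theory.pnatr_eq0.
Qed.

Lemma divpow_comm a b m n : divpow (f a) m * divpow (f b) n = divpow (f b) n * divpow (f a) m.
Proof.
rewrite /divpow -!scalerAl -!scalerAr !scalerA mulrC; congr (_ *: _).
apply: commrX; apply: commr_sym; apply: commrX; exact: commf.
Qed.

Lemma prod_rem (I : eqType) (r : seq I) (F : I -> A) j :
  uniq r -> j \in r -> (forall a b, F a * F b = F b * F a) ->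
  \prod_(i <- r) F i = F j * \prod_(i <- r | i != j) F i.
Proof.
elim: r => // x r IH /= /andP[xr ur]; rewrite inE => /orP[/eqP ->|jr] HC.
  rewrite !big_cons eqxx /=; congr (_ * _).
  rewrite big_seq [RHS]big_seq_cond; apply: eq_bigl => i.
  case: (boolP (i \in r)) => //= ir.
  by symmetry; apply/eqP => E; move: xr; rewrite -E ir.
have xj : x != j by apply/eqP => E; move: xr; rewrite E jr.
rewrite !big_cons xj (IH ur jr HC) !mulrA; congr (_ * _).
exact: HC.
Qed.

Definition Pb {N R : nat} (r s : nat) (b : {ffun 'I_N -> 'I_R.+1}) : bool :=
  [&& (\sum_(j < N) (b j : nat))%N == r,
      (\sum_(j < N) (j * b j)%N)%N == s &
      [forall j : 'I_N, (j < k)%N ==> ((b j : nat) == 0%N)]].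

Definition mon {N R} (b : {ffun 'I_N -> 'I_R.+1}) : A := \prod_(i < N) divpow (f i) (b i).

Definition W (N R r s : nat) := \sum_(b : {ffun 'I_N -> 'I_R.+1} | Pb r s b) mon b.

Definition inc {N R} (j : 'I_N) (b : {ffun 'I_N -> 'I_R.+1}) : {ffun 'I_N -> 'I_R.+1} :=
  [ffun i => if i == j then inord (b i).+1 else b i].
Definition dec {N R} (j : 'I_N) (b : {ffun 'I_N -> 'I_R.+1}) : {ffun 'I_N -> 'I_R.+1} :=
  [ffun i => if i == j then inord (b i).-1 else b i].

Lemma kxW r s : kx f k r s = W s.+1 r r s.
Proof.
rewrite /kx /W; apply: eq_bigr => b /and3P[_ _ /forallP Hz].
rewrite big_geq_mkord big_mkcond /mon; apply: eq_bigr => i _ /=.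
rewrite inord_val; case: ifP => // H.
have := Hz i; rewrite ltnNge H /= => /eqP ->.
by rewrite divpow0.
Qed.

Lemma le_sum_nat N (g : 'I_N -> nat) j : (g j <= \sum_i g i)%N.
Proof. by rewrite (bigD1 j) //= leq_addr. Qed.

Lemma sum_upd N (j : 'I_N) (g g' : 'I_N -> nat) : (forall i, i != j -> g' i = g i) ->
  (\sum_i g' i + g j = \sum_i g i + g' j)%N.
Proof.
move=> H; rewrite (bigD1 j) //= [(\sum_i g i)%N](bigD1 j) //=.
rewrite (eq_bigr g) => [|i /H //]; lia.
Qed.

Lemma fmon N R (j : 'I_N) (b : {ffun 'I_N -> 'I_R.+1}) : (b j < R)%N ->
  f j * mon b = (b j).+1%:R *: mon (inc j b).
Proof.
move=> bj; rewrite /mon.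
have HC : forall (b' : {ffun 'I_N -> 'I_R.+1}) (a c : 'I_N),
   divpow (f a) (b' a) * divpow (f c) (b' c) = divpow (f c) (b' c) * divpow (f a) (b' a).
  by move=> b' a c; exact: divpow_comm.
rewrite !(@prod_rem _ _ _ j (index_enum_uniq _) (mem_index_enum _) (HC _)).
rewrite mulrA divpowS -scalerAl; congr (_ *: (_ * _)).
  by rewrite ffunE eqxx inordK.
by apply: eq_bigr => i ij; rewrite ffunE (negbTE ij).
Qed.

Lemma Pb_bound {N R r s} {b : {ffun 'I_N -> 'I_R.+1}} i : Pb r s b ->
  (b i <= r)%N /\ (i * b i <= s)%N.
Proof.
move=> /and3P[/eqP <- /eqP <- _]; split.
  exact: (@le_sum_nat _ (fun i => (b i : nat))).
exact: (@le_sum_nat _ (fun i : 'I_N => (i * b i)%N)).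
Qed.

Lemma eqSr x r : (0 < r)%N -> (x.+1 == r) = (x == r.-1).
Proof. by case: r. Qed.

Lemma eqDj x j s : (j <= s)%N -> (x + j == s)%N = (x == s - j)%N.
Proof. by move=> js; apply/eqP/eqP; lia. Qed.

Lemma rdx N R r s (j : 'I_N) (G : {ffun 'I_N -> 'I_R.+1} -> A) :
  (0 < r)%N -> (r <= R)%N -> (k <= j)%N -> (j <= s)%N ->
  \sum_(b | Pb r.-1 (s - j) b) G (inc j b) = \sum_(b | Pb r s b && (0 < b j)%N) G b.
Proof.
move=> r0 rR kj js; symmetry.
rewrite (reindex_onto (inc j) (dec j)); last first.
  move=> b /andP[_ bj]; apply/ffunP => i; rewrite !ffunE.
  case: eqP => // ->; rewrite ?eqxx; apply: val_inj => /=.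
  have := ltn_ord (b j) => bl.
  have E : ((inord (b j).-1 : 'I_R.+1) : nat) = (b j).-1 by rewrite inordK //; lia.
  by rewrite E inordK ?prednK.
apply: eq_bigl => b.
have := ltn_ord (b j) => bl.
case: (ltnP (b j) R) => bR; last first.
  have -> : (0 < inc j b j)%N = false.
    rewrite ffunE eqxx /inord val_insubd.
    case: ifP => // H; exfalso; move: H; rewrite ltnS => H.
    by have := leq_ltn_trans bR H; rewrite ltnn.
  rewrite andbF /=; symmetry; apply/negbTE/negP => Hb.
  have [H1 _] := Pb_bound j Hb.
  by have := leq_trans bR H1; lia.
have incj : (inc j b j : nat) = (b j).+1 by rewrite ffunE eqxx inordK.
have -> : dec j (inc j b) == b.
  apply/eqP/ffunP => i; rewrite !ffunE.
  case: eqP => // ->; rewrite ?eqxx; apply: val_inj => /=.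
  have E : ((inord (b j).+1 : 'I_R.+1) : nat) = (b j).+1 by rewrite inordK.
  by rewrite E inordK.
rewrite incj andbT /= andbT.
have S1 := @sum_upd N j (fun i => (b i : nat)) (fun i => (inc j b i : nat)).
have S2 := @sum_upd N j (fun i : 'I_N => (i * b i)%N) (fun i : 'I_N => (i * inc j b i)%N).
rewrite /= incj in S1 S2.
have H0 : forall i, i != j -> (inc j b i : nat) = b i.
  by move=> i ij; rewrite ffunE (negbTE ij).
have E1 := S1 H0.
have E2 := S2 (fun i ij => congr1 (muln i) (H0 i ij)).
rewrite mulnS in E2.
have E1' : (\sum_(i < N) (inc j b i : nat))%N = (\sum_(i < N) (b i : nat)).+1.
  by apply: (@ssrnat.addIn (b j)); rewrite E1 addnS addSn.
have E2' : (\sum_(i < N) (i * inc j b i))%N = ((\sum_(i < N) (i * b i)) + j)%N.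
  by apply: (@ssrnat.addIn (j * b j)%N); rewrite E2 addnA.
rewrite /Pb E1' E2' eqSr // eqDj //; congr [&& _, _ & _].
apply: eq_forallb => i.
case: (eqVneq i j) => [->|ij]; first by rewrite ltnNge kj.
by rewrite ffunE (negbTE ij).
Qed.

Lemma cnt_r N R r s (b : {ffun 'I_N -> 'I_R.+1}) : Pb r s b ->
  (\sum_(j < N | ((k <= j)%N && (j <= s)%N) && (Pb r s b && (0 < b j)%N)) (b j : nat) = r)%N.
Proof.
move=> Hb; have Hb' := Hb; move: Hb' => /and3P[/eqP Hr _ /forallP Hz].
rewrite -{2}Hr big_mkcond; apply: eq_bigr => i _.
rewrite Hb /=; case: ifP => // H.
case: (posnP (b i)) => // bpos; exfalso.
have := Hz i => /implyP Hzi.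
have [_ H2] := Pb_bound i Hb.
move: H; rewrite bpos andbT.
case: (ltnP i k) => ik.
  by move: (Hzi ik) => /eqP; lia.
move=> /= /negbT; rewrite -ltnNge => si.
have := leq_pmulr i bpos; lia.
Qed.

Lemma sum_fmon N R r s (j : 'I_N) : (0 < r)%N -> (r <= R)%N ->
  \sum_(b : {ffun 'I_N -> 'I_R.+1} | Pb r.-1 s b) f j * mon b =
  \sum_(b : {ffun 'I_N -> 'I_R.+1} | Pb r.-1 s b)
     (fun b' : {ffun 'I_N -> 'I_R.+1} => (b' j : nat)%:R *: mon b') (inc j b).
Proof.
move=> r0 rR; apply: eq_bigr => b Hb.
have [H1 _] := Pb_bound j Hb.
rewrite fmon; last by lia.
by rewrite ffunE eqxx inordK //; lia.
Qed.

Lemma rdx' N R r s (j : 'I_N) (G : {ffun 'I_N -> 'I_R.+1} -> A) :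
  (0 < r)%N -> (r <= R)%N -> (k <= j)%N && (j <= s)%N ->
  \sum_(b | Pb r.-1 (s - j) b) G (inc j b) = \sum_(b | Pb r s b && (0 < b j)%N) G b.
Proof. by move=> r0 rR /andP[kj js]; rewrite rdx. Qed.

Lemma WEuler N R r s : (0 < r)%N -> (r <= R)%N ->
  r%:R *: W N R r s = \sum_(j < N | (k <= j)%N && (j <= s)%N) f j * W N R r.-1 (s - j).
Proof.
move=> r0 rR; rewrite /W.
under [RHS]eq_bigr => j Hj do rewrite mulr_sumr sum_fmon // (@rdx' N R r s j (fun b' => (b' j : nat)%:R *: mon b')) //.
rewrite (exchange_big_dep (Pb r s)) /=; last by move=> j b _ /andP[].
rewrite scaler_sumr; apply: eq_bigr => b Hb.
by rewrite -scaler_suml -natr_sum cnt_r.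
Qed.

Lemma W0 N R s : W N R 0 s = (s == 0)%:R.
Proof.
pose b0 : {ffun 'I_N -> 'I_R.+1} := [ffun _ => ord0].
rewrite /W (eq_bigl (fun b => (b == b0) && (s == 0)%N)); last first.
  move=> b; apply/idP/idP.
    move=> Hb; have Hb' := Hb; move: Hb' => /and3P[_ /eqP Hs _].
    have bz : forall i, (b i : nat) = 0%N.
      by move=> i; have [H1 _] := Pb_bound i Hb; apply/eqP; rewrite -leqn0.
    have -> : b == b0.
      by apply/eqP/ffunP => i; rewrite ffunE; apply: val_inj; rewrite /= bz.
    rewrite /= -Hs big1 // => i _; by rewrite bz muln0.
  move=> /andP[/eqP -> /eqP ->]; apply/and3P; split.
  - by rewrite big1 // => i _; rewrite ffunE.
  - by rewrite big1 // => i _; rewrite ffunE muln0.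
  - by apply/forallP => i; rewrite ffunE implybT.
case: eqP => _ /=.
  rewrite (eq_bigl (fun b => b == b0)) => [|b]; last by rewrite andbT.
  rewrite big_pred1_eq /mon big1 // => i _.
  by rewrite ffunE divpow0.
by rewrite big_pred0 // => b; rewrite andbF.
Qed.

Lemma WT N R r : (r <= R)%N -> forall s, (s < N)%N -> r`!%:R *: W N R r s = T r s.
Proof.
elim: r => [|r IH] rR s sN.
  by rewrite fact0 scale1r W0.
rewrite factS natrM mulrC -scalerA WEuler //= scaler_sumr.
rewrite [RHS](@big_ord_widen_cond _ _ _ s.+1 N (fun j => (k <= j)%N) (fun j => f j * T r (s - j))) //.
apply: eq_big => [j|j _]; first by rewrite ltnS.
rewrite scalerAr IH //; first lia.
by have := ltn_ord j; lia.
Qed.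

Lemma KT r s : r`!%:R *: kx f k r s = T r s.
Proof. by rewrite kxW WT. Qed.

Lemma T1 s : (k <= s)%N -> T 1 s = f s.
Proof.
move=> ks; rewrite /= (bigD1 (ord_max : 'I_s.+1)) //= subnn mulr1 big1 ?addr0 //.
move=> i /andP[_ ni].
have := ltn_ord i => il.
have : (i : nat) != s by move: ni; rewrite -(inj_eq val_inj).
move=> ni'.
have -> : (s - i == 0)%N = false by lia.
by rewrite mulr0.
Qed.

Lemma Tr0 r : T r.+1 0 = 0.
Proof. rewrite /= big1 // => i ki; have := ltn_ord i; lia. Qed.

Lemma tg_uT u r' s' : Uplus e h f u -> (0 < r')%N -> (0 < s')%N ->
  (k * r' + K <= r' + s')%N -> tg (u * T r' s').
Proof.
move=> Hu r0 s0 Hc; rewrite -KT -scalerAr; apply: target_scale.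
exact: target_kf.
Qed.

Lemma tg_T r' s' : (0 < r')%N -> (0 < s')%N ->
  (k * r' + K <= r' + s')%N -> tg (T r' s').
Proof. by move=> r0 s0 Hc; rewrite -[T r' s']mul1r; apply: tg_uT => //; exact: Uplus1. Qed.

Lemma mainP r s : (0 < r)%N -> (0 < s)%N -> (k * r + K <= r + s)%N ->
  tg (e 0 * kx f k r s - kx f k r s * e 0).
Proof.
move=> r0 s0 Hc.
have E : kx f k r s = (r`!%:R)^-1 *: T r s.
  by rewrite -KT scalerA mulVf ?scale1r // Num.Theory.pnatr_eq0 -lt0n fact_gt0.
rewrite E -scalerAr -scalerAl -scalerBr; apply: target_scale.
rewrite D1; apply: tg_sub.
  apply: tg_muln; apply: tg_sum => j kj; apply: target_h; first exact: T_Uplus.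
  by apply: leq_trans kj.
case: r r0 Hc {E} => [//|[|r']] _ Hc.
  by rewrite mulr0n; exact: target0.
apply: tg_muln => /=.
rewrite /Psi.
under eq_bigr => j _ do under eq_bigr => l _ do rewrite -subnDA.
rewrite (pairsum s (fun m => f m * T r' (s - m))).
rewrite big_mkcond /=.
rewrite (eq_bigr (fun m : 'I_s.+1 => if (k <= m)%N then
   (f m * T r' (s - m)) *+ m + f m * T r' (s - m)
   + (f m * T r' (s - m)) *+ (k.*2 - m.+1) - (f m * T r' (s - m)) *+ k.*2 else 0)); last first.
  move=> m _; case: ifP => km; last first.
    by rewrite (_ : (m.+1 - k.*2 = 0)%N) ?mulr0n //; lia.
  symmetry; apply/eqP; rewrite subr_eq -mulrSr -!mulrnDr; apply/eqP; congr (_ *+ _); lia.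
rewrite -big_mkcond /= !sumrB !big_split /=.
have TE : \sum_(i < s.+1 | (k <= i)%N) f i * T r' (s - i) = T r'.+1 s by [].
apply: tg_sub; last first.
  rewrite sumrMnl TE; apply: tg_muln; apply: tg_T => //; rewrite !mulnS in Hc *; lia.
apply: target_add; last first.
  apply: tg_sum => m km.
  case: (posnP (k.*2 - m.+1)) => [->|bpos]; first by rewrite mulr0n; exact: target0.
  apply: tg_muln.
  have ms := ltn_ord m.
  case: r' Hc {TE} => [|r'] Hc.
    rewrite /=; case: (eqVneq (s - m) 0)%N => sm; last first.
      by rewrite mulr0; exact: target0.
    have -> : (m : nat) = s by lia.
    rewrite mulr1 -T1; last by lia.
    apply: tg_T => //; lia.
  case: (posnP (s - m)) => [sm|sm].
    by rewrite sm Tr0 mulr0; exact: target0.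
  apply: tg_uT => //; first by apply: Uplus_f; lia.
  rewrite !mulnS in Hc *; lia.
apply: target_add; last first.
  rewrite TE; apply: tg_T => //; rewrite !mulnS in Hc *; lia.
have V := VwE r' s.
have -> : \sum_(i < s.+1 | (k <= i)%N) f i * T r' (s - i) *+ i = Vw r' s by [].
have -> : Vw r' s = ((r'.+1%:R)^-1 * s%:R) *: T r'.+1 s.
  rewrite -scalerA scaler_nat V -scaler_nat scalerA mulVf ?scale1r //.
  by rewrite Num.Theory.pnatr_eq0.
apply: target_scale; apply: tg_T => //; rewrite !mulnS in Hc *; lia.
Qed.

End Main.

Theorem proposition2p5 (A : algType algC) (e h f : nat -> A)
  (Hrel : sl2_current_rels e h f) (r s k K : nat) :
  (0 < r)%N -> (0 < s)%N -> (0 < k)%N -> (k * r + K <= r + s)%N ->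
  target e h f k K (e 0%N * kx f k r s - kx f k r s * e 0%N).
Proof.
move=> r0 s0 k0 Hc.
exact: (@mainP A e h f k Hrel k0 K r s r0 s0 Hc).
Qed.
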